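(* Let $(H,\leq,\ast)$ be a discrete $\omega$-dimensional poc-set, and let $\Sigma,\Xi$ be almost-equality classes in $H^\circ$. If $\Xi$ intersects the closure $\overline{\Sigma}$ of $\Sigma$ in $H^\circ$, then $\Xi\subseteq\overline{\Sigma}$.
   Context: Poc-set: poset with minimum $0$ and order-reversing involution $\ast$ with $h\le h^\ast\Rightarrow h=0$. Discrete: intervals between proper elements finite. Transverse: none of $h\le k,h^\ast\le k,h\le k^\ast,h^\ast\le k^\ast$; $\omega$-dimensional: no infinite transverse subset. Ultrafilter: $\alpha\subseteq H$ with exactly one of $h,h^\ast$ in $\alpha$ for each $h$, no $h,k\in\alpha$ with $h\le k^\ast$; $H^\circ$ the set of ultrafilters with the topology induced from $2^H$ (product topology). $\alpha,\beta$ are almost equal if $\alpha\smallsetminus\beta$ is finite. *)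

(* Defs.v *)
From Stdlib Require Import List.

Set Implicit Arguments.

Definition finite_set {T : Type} (A : T -> Prop) : Prop :=
  exists l : list T, forall x, A x -> In x l.

Record is_pocset (H : Type) (le : H -> H -> Prop) (zero : H) (star : H -> H)
  : Prop := {
  poc_refl    : forall h, le h h;
  poc_antisym : forall h k, le h k -> le k h -> h = k;
  poc_trans   : forall h k l, le h k -> le k l -> le h l;
  poc_min     : forall h, le zero h;
  poc_invol   : forall h, star (star h) = h;
  poc_rev     : forall h k, le h k -> le (star k) (star h);
  poc_nondeg  : forall h, le h (star h) -> h = zero
}.

Section Poc.
Variables (H : Type) (le : H -> H -> Prop) (zero : H) (star : H -> H).

Definition proper (h : H) : Prop := h <> zero /\ h <> star zero.

Definition discrete : Prop :=
  forall h k, proper h -> proper k -> finite_set (fun x => le h x /\ le x k).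

Definition transverse (h k : H) : Prop :=
  ~ le h k /\ ~ le (star h) k /\ ~ le h (star k) /\ ~ le (star h) (star k).

Definition transverse_set (S : H -> Prop) : Prop :=
  forall h k, S h -> S k -> h <> k -> transverse h k.

Definition omega_dimensional : Prop :=
  forall S : H -> Prop, transverse_set S -> finite_set S.

Definition ultrafilter (a : H -> Prop) : Prop :=
  (forall h, (a h /\ ~ a (star h)) \/ (~ a h /\ a (star h))) /\
  (forall h k, a h -> a k -> ~ le h (star k)).

Definition almost_equal (a b : H -> Prop) : Prop :=
  finite_set (fun h => a h /\ ~ b h).

Definition almost_eq_class (Sigma : (H -> Prop) -> Prop) : Prop :=
  exists a, ultrafilter a /\
    forall b, Sigma b <-> (ultrafilter b /\ almost_equal b a).

(* Product topology on 2^H (subsets of H): a set U of subsets is open iff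
   every point of U has a basic cylinder neighbourhood (determined by
   finitely many coordinates) contained in U. *)
Definition agree_on (F : H -> Prop) (a b : H -> Prop) : Prop :=
  forall h, F h -> (a h <-> b h).

Definition open2H (U : (H -> Prop) -> Prop) : Prop :=
  forall a, U a -> exists F, finite_set F /\
    forall b, agree_on F a b -> U b.

(* closure of Sigma (a subset of H°) in H° with the subspace topology:
   a in H° such that every open set of 2^H containing a meets Sigma. *)
Definition closure_in_Hcirc (Sigma : (H -> Prop) -> Prop) (a : H -> Prop)
  : Prop :=
  ultrafilter a /\
  forall U, open2H U -> U a -> exists s, Sigma s /\ U s.

End Poc.

(* Main.v *)
Require Import Defs.
From Stdlib Require Import List Classical Lia.
Import ListNotations.

Lemma ptrans {H} {le : H -> H -> Prop} {zero star} (P : is_pocset le zero star) {h k l} :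
  le h k -> le k l -> le h l.
Proof. apply (poc_trans P). Qed.
Lemma prev {H} {le : H -> H -> Prop} {zero star} (P : is_pocset le zero star) {h k} :
  le h k -> le (star k) (star h).
Proof. apply (poc_rev P). Qed.

Lemma uf_zero {H} {le : H -> H -> Prop} {zero star} (P : is_pocset le zero star) {a} :
  ultrafilter le star a -> ~ a zero.
Proof. intros [_ C] Z. exact (C _ _ Z Z (poc_min P _)). Qed.

Lemma uf_up {H} {le : H -> H -> Prop} {zero star} (P : is_pocset le zero star) {a h k} :
  ultrafilter le star a -> a h -> le h k -> a k.
Proof.
  intros [E C] Ah L. destruct (E k) as [[Ak _]|[_ Ak]]; auto.
  exfalso. apply (C _ _ Ah Ak). rewrite (poc_invol P). exact L.
Qed.

Lemma uf_not {H} {le : H -> H -> Prop} {star} {a} {h : H} :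
  ultrafilter le star a -> a h -> ~ a (star h).
Proof. intros [E _] Ah. destruct (E h) as [[_ N]|[N _]]; tauto. Qed.

Lemma uf_star {H} {le : H -> H -> Prop} {star} {a} {h : H} :
  ultrafilter le star a -> ~ a h -> a (star h).
Proof. intros [E _] Ah. destruct (E h) as [[N _]|[_ N]]; tauto. Qed.

Lemma fin_sub {T} (A B : T -> Prop) : finite_set B -> (forall x, A x -> B x) -> finite_set A.
Proof. intros [l Hl] S. exists l. auto. Qed.

Lemma fin_union {T} (A B : T -> Prop) : finite_set A -> finite_set B ->
  finite_set (fun x => A x \/ B x).
Proof.
  intros [l1 H1] [l2 H2]. exists (l1 ++ l2). intros x [a|b]; apply in_or_app; auto.
Qed.

Lemma fin_single {T} (a : T) : finite_set (fun x => x = a).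
Proof. exists [a]. intros x E. left. auto. Qed.

Lemma fin_bigunion {T U} (l : list U) (Q : U -> T -> Prop) :
  (forall m, In m l -> finite_set (Q m)) -> finite_set (fun x => exists m, In m l /\ Q m x).
Proof.
  induction l as [|a l IH]; intros HQ.
  - exists nil. intros x [m [[] _]].
  - destruct (HQ a (or_introl eq_refl)) as [la Ha].
    destruct IH as [l' Hl']. { intros m Im. apply HQ. right. exact Im. }
    exists (la ++ l'). intros x [m [[E|I] Qx]]; apply in_or_app.
    + subst. left. auto.
    + right. apply Hl'. exists m. auto.
Qed.

Lemma max_exists {H} {le : H -> H -> Prop} {zero star} (P : is_pocset le zero star) :
  forall (l : list H) (S : H -> Prop), (forall x, S x -> In x l) ->
  forall k, S k -> exists m, S m /\ le k m /\ (forall w, S w -> le m w -> w = m).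
Proof.
  induction l as [|a l IH]; intros S HS k Sk.
  - destruct (HS k Sk).
  - set (S' := fun x => S x /\ x <> a).
    assert (HS' : forall x, S' x -> In x l).
    { intros x [Sx Nx]. destruct (HS x Sx); [congruence|auto]. }
    assert (Hlift : forall m, S' m -> (forall w, S' w -> le m w -> w = m) ->
        exists m', S m' /\ le m m' /\ (forall w, S w -> le m' w -> w = m')).
    { intros m [Sm Nm] Mm.
      destruct (classic (forall w, S w -> le m w -> w = m)) as [Hm|Hm].
      - exists m. split; [exact Sm| split; [apply (poc_refl P)| exact Hm]].
      - apply not_all_ex_not in Hm. destruct Hm as [w Hw].
        apply imply_to_and in Hw. destruct Hw as [Sw Hw].
        apply imply_to_and in Hw. destruct Hw as [Lmw Nw].
        destruct (classic (w = a)) as [Ewa|Nwa].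
        2: { exfalso. apply Nw. apply Mm; [split; assumption| exact Lmw]. }
        subst w. exists a. split; [exact Sw|split; [exact Lmw|]].
        intros z Sz Laz. destruct (classic (z = a)) as [E|Nz]; [exact E|].
        exfalso. assert (z = m) by (apply Mm; [split; assumption| exact (ptrans P Lmw Laz)]).
        subst z. apply Nm. apply (poc_antisym P); assumption. }
    destruct (classic (k = a)) as [Eka|Nka].
    + destruct (classic (forall w, S w -> le k w -> w = k)) as [Hk|Hk].
      * exists k. split; [exact Sk|split; [apply (poc_refl P)|exact Hk]].
      * apply not_all_ex_not in Hk. destruct Hk as [z Hz].
        apply imply_to_and in Hz. destruct Hz as [Sz Hz].
        apply imply_to_and in Hz. destruct Hz as [Lkz Nz].
        assert (S'z : S' z) by (split; [exact Sz| congruence]).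
        destruct (IH S' HS' z S'z) as [m [S'm [Lzm Mm]]].
        destruct (Hlift m S'm Mm) as [m' [Sm' [Lmm' Mm']]].
        exists m'. split; [exact Sm'|split; [|exact Mm']].
        exact (ptrans P Lkz (ptrans P Lzm Lmm')).
    + destruct (IH S' HS' k (conj Sk Nka)) as [m [S'm [Lkm Mm]]].
      destruct (Hlift m S'm Mm) as [m' [Sm' [Lmm' Mm']]].
      exists m'. split; [exact Sm'|split; [|exact Mm']].
      exact (ptrans P Lkm Lmm').
Qed.

Lemma list_remove {T} (l : list T) h : In h l ->
  exists l', length l' < length l /\ forall m, In m l -> m <> h -> In m l'.
Proof.
  induction l as [|a l IH]; intros Hin; [destruct Hin|].
  destruct (classic (a = h)) as [E|N].
  - exists l. split; [simpl; lia|]. intros m [E'|I] Nm; [congruence|exact I].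
  - destruct Hin as [E|I]; [contradiction|]. destruct (IH I) as [l' [Ll Hl]].
    exists (a :: l'). split; [simpl; lia|]. intros m [E'|I'] Nm; [left; exact E'|right; auto].
Qed.

Lemma cl_char {H} (le : H -> H -> Prop) star (Sigma : (H->Prop)->Prop) x :
  closure_in_Hcirc le star Sigma x <-> ultrafilter le star x /\
    forall lF : list H, exists s, Sigma s /\ forall m, In m lF -> (x m <-> s m).
Proof.
  split.
  - intros [Ux C]. split; [exact Ux|]. intro lF.
    apply (C (fun b => forall m, In m lF -> (x m <-> b m))).
    + intros b Hb. exists (fun m => In m lF). split; [exists lF; auto|].
      intros c Ag m Im. pose proof (Hb m Im). pose proof (Ag m Im). tauto.
    + intros m _. tauto.
  - intros [Ux C]. split; [exact Ux|]. intros U OU Ux'.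
    destruct (OU x Ux') as [F [[lF HF] HU]].
    destruct (C lF) as [s [Ss Hs]]. exists s. split; [exact Ss|].
    apply HU. intros m Fm. apply Hs. apply HF. exact Fm.
Qed.

Lemma cl_sub {H} {le : H -> H -> Prop} {star Sigma} {x y : H -> Prop} :
  closure_in_Hcirc le star Sigma x -> ultrafilter le star y ->
  (forall m, y m -> x m) -> closure_in_Hcirc le star Sigma y.
Proof.
  intros Cx Uy Hyx. apply cl_char in Cx. destruct Cx as [Ux Cl].
  assert (E : forall m, x m <-> y m).
  { intro m; split; [|apply Hyx]. intro Xm. destruct (classic (y m)) as [Ym|Nym]; [exact Ym|].
    exfalso. exact (uf_not Ux Xm (Hyx _ (uf_star Uy Nym))). }
  apply cl_char. split; [exact Uy|]. intro lF. destruct (Cl lF) as [s [Ss Hs]].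
  exists s. split; [exact Ss|]. intros m Im. pose proof (Hs m Im). pose proof (E m). tauto.
Qed.

Definition flip {H} (le : H -> H -> Prop) star (h : H) (s : H -> Prop) : H -> Prop :=
  fun m => le h m \/ (~ le m (star h) /\ s m).

Lemma flip_uf {H} {le : H -> H -> Prop} {zero star} (P : is_pocset le zero star) {h s} :
  h <> zero -> ultrafilter le star s -> ultrafilter le star (flip le star h s).
Proof.
  intros hz [E C]. unfold flip.
  assert (NH : ~ le h (star h)) by (intro L; apply hz; apply (poc_nondeg P); exact L).
  split.
  - intro m.
    destruct (classic (le h m)) as [Lhm|Nhm].
    + left. split; [left; exact Lhm|].
      intros [L|[N _]].
      * apply NH. exact (ptrans P L (prev P Lhm)).
      * apply N. exact (prev P Lhm).
    + destruct (classic (le m (star h))) as [Lmh|Nmh].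
      * right. split.
        -- intros [L|[N _]]; [exact (Nhm L)| exact (N Lmh)].
        -- left. pose proof (prev P Lmh) as R. rewrite (poc_invol P) in R. exact R.
      * assert (N1 : ~ le h (star m)).
        { intro L. apply Nmh. pose proof (prev P L) as R. rewrite (poc_invol P) in R. exact R. }
        assert (N2 : ~ le (star m) (star h)).
        { intro L. apply Nhm. pose proof (prev P L) as R. rewrite !(poc_invol P) in R. exact R. }
        destruct (E m) as [[A B]|[A B]]; [left|right]; split; tauto.
  - intros m k Fm Fk L.
    destruct Fm as [Hm|[Nm Sm]]; destruct Fk as [Hk|[Nk Sk]].
    + apply NH. exact (ptrans P Hm (ptrans P L (prev P Hk))).
    + apply Nk. pose proof (prev P (ptrans P Hm L)) as R.
      rewrite (poc_invol P) in R. exact R.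
    + apply Nm. exact (ptrans P L (prev P Hk)).
    + exact (C m k Sm Sk L).
Qed.

Lemma core {H} {le : H -> H -> Prop} {zero star} (P : is_pocset le zero star)
  (Hdisc : discrete le zero star) (Homega : omega_dimensional le star)
  {Sigma a} (Ua : ultrafilter le star a)
  (HS : forall b, Sigma b <-> (ultrafilter le star b /\ almost_equal b a))
  {x h} : closure_in_Hcirc le star Sigma x -> h <> zero -> x (star h) ->
  (forall k, x k -> le k (star h) -> k = star h) ->
  closure_in_Hcirc le star Sigma (flip le star h x).
Proof.
  intros Cx hz xh Min.
  pose proof (proj1 (cl_char _ _ _ _) Cx) as [Ux Cl].
  assert (AS : forall s, Sigma s -> finite_set (fun m => a m /\ ~ s m)).
  { intros s Ss. apply HS in Ss. destruct Ss as [Us [l Hl]].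
    exists (map star l). intros m [Am Nsm].
    assert (I : In (star m) l) by (apply Hl; split; [apply (uf_star Us); assumption| apply (uf_not Ua Am)]).
    rewrite <- (poc_invol P m). apply in_map. exact I. }
  set (B' := fun k => a k /\ le k (star h) /\ k <> star h).
  assert (hs_prop : star h <> zero /\ star h <> star zero).
  { split.
    - intro E. apply (uf_zero P Ux). rewrite <- E. exact xh.
    - intro E. apply hz. rewrite <- (poc_invol P h), E. apply (poc_invol P). }
  assert (Bprop : forall k, B' k -> proper zero star k).
  { intros k [Ak [Lk _]]. split.
    - intro E. apply (uf_zero P Ua). rewrite <- E. exact Ak.
    - intro E. subst k. apply hz. apply (poc_antisym P); [|apply (poc_min P)].
      pose proof (prev P Lk) as R. rewrite !(poc_invol P) in R. exact R. }
  assert (Down : forall k, B' k -> finite_set (fun w => a w /\ le w k)).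
  { intros k [Ak [Lk Nk]].
    destruct (Cl [k]) as [s [Ss Hs]].
    assert (Nxk : ~ x k) by (intro X; exact (Nk (Min k X Lk))).
    assert (Nsk : ~ s k).
    { intro S. apply Nxk. apply (proj2 (Hs k (or_introl eq_refl))). exact S. }
    destruct (proj1 (HS s) Ss) as [Us _].
    apply (fin_sub _ _ (AS s Ss)). intros w [Aw Lw]. split; [exact Aw|].
    intro Sw. apply Nsk. exact (uf_up P Us Sw Lw). }
  assert (Up : forall k, B' k -> exists m, B' m /\ le k m /\ (forall w, B' w -> le m w -> w = m)).
  { intros k Bk.
    destruct (Hdisc k (star h) (Bprop k Bk) hs_prop) as [l Hl].
    assert (HSl : forall y, (B' y /\ le k y) -> In y l).
    { intros y [By Ly]. apply Hl. split; [exact Ly| apply (proj1 (proj2 By))]. }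
    destruct (max_exists P l (fun m => B' m /\ le k m) HSl k (conj Bk (poc_refl P k)))
      as [m [[Bm Lkm] [_ Mm]]].
    exists m. split; [exact Bm|split; [exact Lkm|]].
    intros w Bw Lmw. apply Mm; [split; [exact Bw| exact (ptrans P Lkm Lmw)]| exact Lmw]. }
  set (Mx := fun m => B' m /\ (forall w, B' w -> le m w -> w = m)).
  assert (FMx : finite_set Mx).
  { apply Homega. intros m1 m2 [B1 M1] [B2 M2] Ne.
    pose proof B1 as B1'. pose proof B2 as B2'.
    destruct B1 as [A1 [L1 N1]]. destruct B2 as [A2 [L2 N2]].
    unfold transverse. repeat split.
    - intro L. apply Ne. symmetry. apply M1; [exact B2'| exact L].
    - intro L. apply hz. apply (poc_nondeg P).
      pose proof (prev P (ptrans P L L2)) as R. rewrite !(poc_invol P) in R.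
      exact (ptrans P R L1).
    - intro L. exact (proj2 Ua _ _ A1 A2 L).
    - intro L. pose proof (prev P L) as R. rewrite !(poc_invol P) in R.
      apply Ne. apply M2; [exact B1'| exact R]. }
  destruct FMx as [lM HM].
  assert (FB : finite_set (fun k => a k /\ le k (star h))).
  { assert (FU : finite_set (fun w => exists m, In m lM /\ (Mx m /\ a w /\ le w m))).
    { apply (fin_bigunion lM (fun m w => (Mx m /\ a w /\ le w m))).
      intros m _. destruct (classic (Mx m)) as [Mm|Nm].
      + apply (fin_sub _ _ (Down m (proj1 Mm))). intros w [_ [Aw Lw]]. split; assumption.
      + exists nil. intros w [Mm _]. contradiction. }
    apply (fin_sub _ _ (fin_union _ _ (fin_single (star h)) FU)).
    intros k [Ak Lk]. destruct (classic (k = star h)) as [E|Nk]; [left; exact E|].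
      right. destruct (Up k (conj Ak (conj Lk Nk))) as [m [Bm [Lkm Mm]]].
      exists m. split; [apply HM; split; assumption|]. split; [split; assumption|].
      split; assumption. }
  apply (proj2 (cl_char _ _ _ _)). split; [exact (flip_uf P hz Ux)|].
  intro lF. destruct (Cl lF) as [s [Ss Hs]].
  exists (flip le star h s). split.
  - apply HS. destruct (proj1 (HS s) Ss) as [Us [l Hl]]. split; [exact (flip_uf P hz Us)|].
    destruct FB as [lB HB].
    exists (l ++ map star lB). intros m [Fm Nam]. apply in_or_app.
    destruct Fm as [Lhm|[_ Sm]].
    + right. rewrite <- (poc_invol P m). apply in_map. apply HB. split.
      * apply (uf_star Ua). exact Nam.
      * exact (prev P Lhm).
    + left. apply Hl. split; assumption.
  - intros m Im. unfold flip. pose proof (Hs m Im). tauto.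
Qed.

Lemma chain {H} {le : H -> H -> Prop} {zero star} (P : is_pocset le zero star)
  (Hdisc : discrete le zero star) (Homega : omega_dimensional le star)
  {Sigma a} (Ua : ultrafilter le star a)
  (HS : forall b, Sigma b <-> (ultrafilter le star b /\ almost_equal b a))
  {y} (Uy : ultrafilter le star y) :
  forall n (l : list H) x, length l <= n -> closure_in_Hcirc le star Sigma x ->
  (forall m, y m -> ~ x m -> In m l) -> closure_in_Hcirc le star Sigma y.
Proof.
  induction n as [|n IH]; intros l x Ll Cx Hl;
    (destruct (classic (exists m, y m /\ ~ x m)) as [[m0 [Ym0 Nm0]]|ND];
     [|apply (cl_sub Cx Uy); intros m Ym; apply NNPP; intro Nx; apply ND; exists m; auto]).
  - pose proof (Hl m0 Ym0 Nm0) as I. destruct l; simpl in *; [contradiction|lia].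
  - set (D := fun m => y m /\ ~ x m).
    destruct (max_exists P l D (fun m Dm => Hl m (proj1 Dm) (proj2 Dm)) m0 (conj Ym0 Nm0))
      as [h [[Yh Nxh] [_ Mh]]].
    pose proof (proj1 (cl_char _ _ _ _) Cx) as [Ux _].
    assert (hz : h <> zero) by (intro E; rewrite E in Yh; exact (uf_zero P Uy Yh)).
    assert (xh : x (star h)) by (apply (uf_star Ux); exact Nxh).
    assert (Min : forall k, x k -> le k (star h) -> k = star h).
    { intros k Xk Lk. destruct (classic (k = star h)) as [E|Nk]; [exact E|]. exfalso.
      assert (L2 : le h (star k)) by (pose proof (prev P Lk) as R; rewrite (poc_invol P) in R; exact R).
      assert (Dk : D (star k)) by (split; [exact (uf_up P Uy Yh L2)| exact (uf_not Ux Xk)]).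
      pose proof (Mh _ Dk L2) as E. apply Nk. rewrite <- E. symmetry. apply (poc_invol P). }
    destruct (list_remove l h (Hl h Yh Nxh)) as [l' [Ll' Hl']].
    apply (IH l' (flip le star h x)).
    + lia.
    + exact (core P Hdisc Homega Ua HS Cx hz xh Min).
    + intros m Ym Nfm. apply Hl'.
      * apply Hl; [exact Ym|]. intro Xm. apply Nfm. right. split; [|exact Xm].
        intro Lm. pose proof (Min m Xm Lm) as E. subst m. exact (uf_not Uy Yh Ym).
      * intro E. subst m. apply Nfm. left. apply (poc_refl P).
Qed.

Theorem mainTheorem20 (H : Type) (le : H -> H -> Prop) (zero : H)
  (star : H -> H)
  (Hpoc : is_pocset le zero star)
  (Hdisc : discrete le zero star)
  (Homega : omega_dimensional le star)
  (Sigma Xi : (H -> Prop) -> Prop)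
  (HSigma : almost_eq_class le star Sigma)
  (HXi : almost_eq_class le star Xi)
  (Hmeet : exists x, Xi x /\ closure_in_Hcirc le star Sigma x) :
  forall x, Xi x -> closure_in_Hcirc le star Sigma x.
Proof.
  intros y Xy. destruct HSigma as [a [Ua HS]]. destruct HXi as [b [Ub HX]].
  destruct Hmeet as [x0 [Xx0 Cx0]].
  destruct (proj1 (HX y) Xy) as [Uy [ly Hly]].
  destruct (proj1 (HX x0) Xx0) as [Ux0 [lx Hlx]].
  apply (chain Hpoc Hdisc Homega Ua HS Uy (length (ly ++ map star lx)) (ly ++ map star lx) x0
           (le_n _) Cx0).
  intros m Ym Nx. apply in_or_app. destruct (classic (b m)) as [Bm|Nb].
  - right. rewrite <- (poc_invol Hpoc m). apply in_map. apply Hlx. split.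
    + exact (uf_star Ux0 Nx).
    + exact (uf_not Ub Bm).
  - left. apply Hly. split; assumption.
Qed.
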